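(* There exist a real number $d>1$, a family $\mathcal{H}$ of finite graphs with $\mu_{\log}(\mathcal{H})\le d$, and a real $\lambda\in(0,\lambda_c(d))$ such that $\lambda$ is an accumulation point of the zeros of the partition functions $\{Z_H: H\in\mathcal{H}\}$; in particular, no set of the form $\{z\in\mathbb{C}:|z-z_0|<\delta\text{ for some }z_0\in[0,\lambda_c(d))\}$ with $\delta>0$ is zero-free for all $Z_H$, $H\in\mathcal{H}$.
   Context: For a finite graph $G$, $Z_G(z)=\sum_I z^{|I|}$ over independent sets $I$ of $G$. A point $a$ is an accumulation point of the zeros of a family of functions if every neighborhood of $a$ contains a zero of some member of the family. A self-avoiding walk (SAW) of length $i$ from $v$ is a walk $v=v_0,\dots,v_i$ with all vertices distinct; $\mathcal{N}_{\le \ell}(G,v)$ is the number of SAWs of length between $1$ and $\ell$ starting at $v$. ''$\mu_{\log}(\mathcal{H})\le d$'' means: there exist constants $a,c$ such that for every $G=(V,E)\in\mathcal{H}$, every $v\in V$ and every $\ell\ge a\log|V|$, $\mathcal{N}_{\le\ell}(G,v)\le c\,d^\ell$. For $x>1$, $\lambda_c(x)=x^x/(x-1)^{x+1}$. *)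

(* Defs.v *)
From HB Require Import structures.
From mathcomp Require Import all_boot all_order all_algebra.
From mathcomp Require Import all_classical all_reals.
From mathcomp Require Import exp.
From mathcomp Require Import complex.
From mathcomp Require Import Rstruct.
From Stdlib Require Import Rdefinitions.

Set Implicit Arguments.
Unset Strict Implicit.
Unset Printing Implicit Defensive.

Import Order.TTheory GRing.Theory Num.Theory.
Local Open Scope ring_scope.

Notation RR := Rdefinitions.R.
Notation CC := (complex RR).

Record sgraph := SGraph {
  gV :> finType;
  gadj : rel gV;
  gadj_sym : symmetric gadj;
  gadj_irr : irreflexive gadj }.

Definition independent (G : sgraph) (I : {set G}) : bool :=
  [forall x in I, forall y in I, ~~ gadj x y].

Definition Z (G : sgraph) (z : CC) : CC :=
  \sum_(I : {set G} | independent I) z ^+ #|I|.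

Definition saw (G : sgraph) (v : G) (s : seq G) : bool :=
  path (@gadj G) v s && uniq (v :: s).

Definition N_le (G : sgraph) (v : G) (l : nat) : nat :=
  \sum_(1 <= i < l.+1) #|[set t : i.-tuple G | saw v t]|.

Definition mu_log_le (H : sgraph -> Prop) (d : RR) : Prop :=
  exists a c : RR, forall G : sgraph, H G -> forall (v : G) (l : nat),
    a * ln (#|G|%:R) <= l%:R -> (N_le v l)%:R <= c * d ^+ l.

Definition lambda_c (x : RR) : RR := powR x x / powR (x - 1) (x + 1).

Definition zero_accum (H : sgraph -> Prop) (a : CC) : Prop :=
  forall eps : RR, 0 < eps ->
    exists G : sgraph, H G /\ exists z : CC, Z G z = 0 /\ `|z - a| < (eps%:C)%C.

(* Main.v *)
Require Import Defs.
From HB Require Import structures.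
From mathcomp Require Import all_boot all_order all_algebra.
From mathcomp Require Import all_classical all_reals.
From mathcomp Require Import exp complex Rstruct ring lra zify.
From Stdlib Require Import Rtrigo1 Ratan.
Import Order.TTheory GRing.Theory Num.Theory.
Local Open Scope ring_scope.


Section MP.
Variables (V P : finType) (lab : V -> option P).

Definition mpadj : rel V := fun x y =>
  [&& lab x != None, lab y != None & lab x != lab y].

Lemma mpadj_sym : symmetric mpadj.
Proof. by move=> x y; rewrite /mpadj; case: (lab x) => [a|]; case: (lab y) => [b|] //=; rewrite eq_sym. Qed.

Lemma mpadj_irr : irreflexive mpadj.
Proof. by move=> x; rewrite /mpadj eqxx !andbF. Qed.

Definition mpG := SGraph mpadj_sym mpadj_irr.

Definition Pad : {set V} := [set x | lab x == None].
Definition Part (p : P) : {set V} := [set x | lab x == Some p].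

Lemma sum_subset (R : comNzRingType) (A : {set V}) (z : R) :
  \sum_(I : {set V}) (if I \subset A then z ^+ #|I| else 0) = (1 + z) ^+ #|A|.
Proof.
have := @bigA_distr R 0 1 *%R +%R V (fun i : V => if i \in A then z else 0) (fun _ => 1).
move=> H.
transitivity (\prod_(i : V) ((if i \in A then z else 0) + 1)).
  rewrite H; apply: eq_bigr => I _.
  rewrite -big_mkcond /=.
  case: ifP => [/fintype.subsetP sIA|].
    rewrite (eq_bigr (fun _ => z)) ?prodr_const // => i /sIA ->; done.
  move/negbT/fintype.subsetPn => [x xI xA].
  by rewrite (bigD1 x) //= (negbTE xA) mul0r.
rewrite (bigID (mem A)) /= (eq_bigr (fun _ => 1 + z)); last by move=> i ->; rewrite addrC.
rewrite prodr_const (eq_bigr (fun _ => 1)); last by move=> i /negbTE ->; rewrite add0r.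
by rewrite prodr_const expr1n mulr1 cardE.
Qed.


Lemma indepP (I : {set V}) :
  reflect (forall x y, x \in I -> y \in I -> ~~ mpadj x y) (@independent mpG I).
Proof.
apply: (iffP forall_inP) => [H x y xI yI| H x xI].
  by have /forall_inP := H x xI; apply.
by apply/forall_inP => y yI; apply: H.
Qed.

Lemma indep_part (I : {set V}) p : I \subset Part p :|: Pad -> @independent mpG I.
Proof.
move=> /fintype.subsetP sI; apply/indepP => x y /sI + /sI.
rewrite /mpadj !inE => /orP[]/eqP-> /orP[]/eqP-> //=; by rewrite ?eqxx ?andbF.
Qed.

Lemma indep_pad (I : {set V}) : I \subset Pad -> @independent mpG I.
Proof.
move=> /fintype.subsetP sI; apply/indepP => x y /sI + _.
by rewrite /mpadj !inE => ->.
Qed.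

Lemma indep_sub (I : {set V}) x q : @independent mpG I -> x \in I ->
  lab x = Some q -> I \subset Part q :|: Pad.
Proof.
move=> /indepP H xI lx; apply/fintype.subsetP => y yI.
have := H x y xI yI; rewrite /mpadj lx !inE /=.
by case: (lab y) => [b|] //=; rewrite negbK eq_sym => ->.
Qed.

Lemma part_uniq (I : {set V}) x q p : x \in I -> lab x = Some q ->
  I \subset Part p :|: Pad -> p = q.
Proof.
move=> xI lx /fintype.subsetP/(_ x xI); rewrite !inE lx orbF.
by move/eqP => [].
Qed.

Lemma indicator (R : nzRingType) (I : {set V}) (w : R) :
  (if @independent mpG I then w else 0) =
  (if I \subset Pad then w else 0) +
  \sum_p (if (I \subset Part p :|: Pad) && ~~ (I \subset Pad) then w else 0).
Proof.
case: (boolP (I \subset Pad)) => sP.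
  by rewrite indep_pad // big1 ?addr0 // => p _; rewrite andbF.
rewrite add0r; move: (sP) => /fintype.subsetPn [x xI].
rewrite inE; case lx: (lab x) => [q|] // _.
case: (boolP (@independent mpG I)) => ind.
  rewrite (bigD1 q) //= (@indep_sub I x q ind xI lx) big1 ?addr0 // => p /negbTE pq.
  case: ifP => // /andP[/(@part_uniq I x q p xI lx) pq' _].
  by rewrite pq' eqxx in pq.
rewrite big1 // => p _; case: ifP => // /andP[/indep_part]; by rewrite (negbTE ind).
Qed.

Lemma Z_mp (z : CC) : Z mpG z =
  (1 + z) ^+ #|Pad| * (1 + \sum_p ((1 + z) ^+ #|Part p| - 1)).
Proof.
rewrite /Z big_mkcond /=.
rewrite (eq_bigr _ (fun I _ => @indicator CC I (z ^+ #|I|))) big_split /= sum_subset.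
rewrite exchange_big /=.
rewrite mulrDr mulr1 big_distrr /=; congr (_ + _); apply: eq_bigr => p _.
have sPP : Pad \subset Part p :|: Pad by apply: finset.subsetUr.
transitivity (\sum_(I : {set V}) ((if I \subset Part p :|: Pad then z ^+ #|I| else 0)
   - (if I \subset Pad then z ^+ #|I| else 0))).
  apply: eq_bigr => I _; case: (boolP (I \subset Pad)) => sI.
    by rewrite (fintype.subset_trans sI sPP) andbF subrr.
  by rewrite andbT subr0.
rewrite sumrB !sum_subset.
have dj : [disjoint Part p & Pad].
  by apply/pred0P => x; rewrite /= !inE; case: (lab x) => [a|] //=; rewrite andbF.
by rewrite cardsU (disjoint_setI0 dj) cards0 subn0 exprD mulrBr mulr1 mulrC.
Qed.

End MP.
Arguments Pad {V P}.
Arguments Part {V P}.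
Arguments mpG {V P}.
Arguments Z_mp {V P}.
Arguments mpadj {V P}.


Notation W k m := ((bool * 'I_k) + ('I_m * 'I_k))%type.
Notation VV k m M := (W k m + 'I_M)%type.

Section Inst.
Variables (k m M : nat).
Definition lab (x : VV k m M) : option 'I_m.+1 :=
  match x with
  | inl (inl _) => Some ord0
  | inl (inr (p, _)) => Some (lift ord0 p)
  | inr _ => None
  end.

Lemma card_Pad : #|Pad lab| = M.
Proof.
rewrite -sum1_card big_mkcond big_sumType /= big1 ?add0n.
  by rewrite (eq_bigr (fun _ => 1%N)) ?sum1_card ?card_ord // => i _; rewrite inE.
by case=> [[]|[]] ? *; rewrite inE.
Qed.

Lemma card_Part0 : #|Part lab ord0| = (2 * k)%N.
Proof.
rewrite -sum1_card big_mkcond big_sumType /= [X in (_ + X)%N]big1 ?addn0; last first.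
  by move=> i _; rewrite inE.
rewrite big_sumType /= [X in (_ + X)%N]big1 ?addn0; last first.
  case=> p a _; rewrite inE /=.
  by [].
transitivity (\sum_(i : bool * 'I_k) 1)%N.
  by apply: eq_bigr => i _; rewrite inE.
by rewrite sum1_card card_prod card_bool card_ord.
Qed.

Lemma card_PartS (p : 'I_m) : #|Part lab (lift ord0 p)| = k.
Proof.
rewrite -sum1_card big_mkcond big_sumType /= [X in (_ + X)%N]big1 ?addn0; last first.
  by move=> i _; rewrite inE.
rewrite big_sumType /= big1 ?add0n; last first.
  by case=> b a _; rewrite inE.
transitivity (\sum_(i : 'I_m * 'I_k) (if i.1 == p then 1 else 0))%N.
  apply: eq_bigr => [[q a]] _; rewrite inE /=.
  have -> : (Some (lift ord0 q) == Some (lift ord0 p)) = (lift ord0 q == lift ord0 p) by [].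
  by rewrite (inj_eq (@lift_inj _ ord0)).
transitivity (\sum_(i : 'I_m) \sum_(j : 'I_k) (if i == p then 1 else 0))%N.
  by rewrite pair_bigA.
rewrite (bigD1 p) //= [X in (_ + X)%N]big1 ?addn0.
  by rewrite eqxx sum_nat_const card_ord muln1.
by move=> q /negbTE ->; rewrite big1.
Qed.

Lemma Z_inst (z : CC) : Z (mpG lab) z =
  (1 + z) ^+ M * (((1 + z) ^+ k) ^+ 2 + m%:R * (1 + z) ^+ k - m%:R).
Proof.
rewrite Z_mp card_Pad big_ord_recl card_Part0.
rewrite (eq_bigr (fun _ => (1 + z) ^+ k - 1)); last by move=> i _; rewrite card_PartS.
rewrite sumr_const card_ord mulnC exprM.
congr (_ * _); rewrite -mulr_natl; ring.
Qed.

End Inst.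

Section Trig.
Local Open Scope complex_scope.


Definition cs (t : RR) : CC := (cos t) +i* (sin t).

Lemma csM a b : cs a * cs b = cs (a + b).
Proof.
rewrite /cs; simpc.
rewrite cos_plus sin_plus.
by congr (_ +i* _); rewrite addrC.
Qed.

Lemma cs0 : cs 0 = 1.
Proof. by rewrite /cs cos_0 sin_0. Qed.

Lemma csX t n : cs t ^+ n = cs (t *+ n).
Proof.
elim: n => [|n IH]; first by rewrite expr0 mulr0n cs0.
by rewrite exprS IH csM mulrS.
Qed.

Lemma csPI : cs PI = -1.
Proof. by rewrite /cs cos_PI sin_PI; apply/eqP; rewrite eq_complex /= oppr0 !eqxx. Qed.

Lemma sin_lt (x : RR) : 0 < x -> sin x < x.
Proof. by move=> /RltP h; apply/RltP; apply: sin_lt_x. Qed.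

Lemma sin_ge (x : RR) : 0 <= x -> x <= PI -> 0 <= sin x.
Proof. by move=> /RleP h1 /RleP h2; apply/RleP; apply: sin_ge_0. Qed.

Lemma PI_gt0 : 0 < PI.
Proof. by apply/RltP; apply: PI_RGT_0. Qed.

Lemma cos2 (a : RR) : cos (2 * a) = 1 - 2 * sin a * sin a.
Proof. exact: cos_2a_sin. Qed.

Lemma bern (x : RR) n : 0 <= x -> 1 + x *+ n <= (1 + x) ^+ n.
Proof.
move=> x0; elim: n => [|n IH]; first by rewrite mulr0n expr0 addr0.
rewrite exprS mulrS.
have h : 0 <= x *+ n by rewrite mulrn_wge0.
nra.
Qed.

Section Root.
Variable j : nat.
Local Notation k := j.+2.
Definition mR : RR := (2 ^ k)%N%:R.
Definition U : RR := (mR + Num.sqrt (mR ^+ 2 + 4 * mR)) / 2.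

Lemma mR_ge1 : 1 <= mR.
Proof. by rewrite /mR ler1n expn_gt0. Qed.

Lemma U_eq : U ^+ 2 - mR * U - mR = 0.
Proof.
have h := mR_ge1.
have s2 : Num.sqrt (mR ^+ 2 + 4 * mR) ^+ 2 = mR ^+ 2 + 4 * mR.
  by rewrite sqr_sqrtr //; nra.
rewrite /U; set s := Num.sqrt _ in s2 *.
rewrite -[LHS]/(((mR + s)/2)^+2 - mR * ((mR + s)/2) - mR).
have -> : ((mR + s)/2)^+2 - mR * ((mR + s)/2) - mR = (s^+2 - mR^+2 - 4 * mR) / 4.
  by field.
by rewrite s2; field.
Qed.

Lemma sqrt_facts : let s := Num.sqrt (mR ^+ 2 + 4 * mR) in
  0 <= s /\ s ^+ 2 = mR ^+ 2 + 4 * mR.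
Proof.
have h := mR_ge1.
split; first exact: sqrtr_ge0.
by rewrite sqr_sqrtr //; nra.
Qed.

Lemma U_bounds : mR <= U /\ U <= mR + 1.
Proof.
have h := mR_ge1.
have [s0 s2] := sqrt_facts.
rewrite /U; set s := Num.sqrt _ in s0 s2 *.
split; nra.
Qed.

Definition rr : RR := U `^ (k%:R^-1).

Lemma U_gt0 : 0 < U.
Proof. have h := mR_ge1; have [h1 _] := U_bounds; lra. Qed.

Lemma rr_ge0 : 0 <= rr.
Proof. exact: powR_ge0. Qed.

Lemma rr_k : rr ^+ k = U.
Proof.
rewrite /rr -powR_mulrn ?powR_ge0 // -powRrM mulVf ?pnatr_eq0 //.
by rewrite powRr1 // ltW // U_gt0.
Qed.

Lemma rr_ge2 : 2 <= rr.
Proof.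
rewrite leNgt; apply/negP => h.
have := ltrXn2r k rr_ge0 h; rewrite /= rr_k => h2.
have [h3 _] := U_bounds.
have : mR = 2 ^+ k by rewrite /mR natrX.
lra.
Qed.

Lemma rr_le : rr <= 2 + 2 / k%:R.
Proof.
rewrite leNgt; apply/negP => h.
have k0 : 0 < (k%:R : RR) by rewrite ltr0n.
have h0 : 0 <= 2 + 2 / (k%:R : RR) by rewrite addr_ge0 // divr_ge0 // ltW.
have := ltrXn2r k h0 h; rewrite /= rr_k => h2.
have e : 2 + 2 / (k%:R : RR) = 2 * (1 + k%:R^-1) by rewrite mulrDr mulr1.

rewrite e exprMn in h2.
have kinv : 0 <= (k%:R : RR)^-1 by rewrite invr_ge0 ltW.
have b := @bern _ k kinv.
rewrite -[_ *+ k]mulr_natr mulVf ?gt_eqF // in b.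
have [_ h3] := U_bounds.
have : mR = 2 ^+ k by rewrite /mR natrX.
have : 1 <= (2 : RR) ^+ k by rewrite exprn_ege1 // ler1n.
move=> h4 h5; rewrite -h5 in h2.
nra.
Qed.

Definition th : RR := PI / k%:R.
Definition ww : CC := rr%:C * cs th.

Lemma ww_k : ww ^+ k = (- U)%:C.
Proof.
have e : th *+ k = PI.
  by rewrite /th -[_ *+ k]mulr_natr divfK ?pnatr_eq0.
rewrite /ww (exprMn_comm _ (mulrC _ _)) csX e csPI.
by rewrite -(rmorphXn (real_complex RR)) rr_k mulrN1 (rmorphN (real_complex RR)).
Qed.

Lemma th_gt0 : 0 < th.
Proof. by rewrite /th divr_gt0 ?ltr0n // PI_gt0. Qed.

Lemma th_lePI : th <= PI.
Proof.
rewrite /th ler_pdivrMr ?ltr0n //.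
have h := PI_gt0; rewrite ler_peMr ?ltW // ?ltr1n //.
Qed.

Lemma cos_bounds : 0 <= 1 - cos th <= th ^+ 2 / 2.
Proof.
have t0 := th_gt0; have tp := th_lePI.
have e : th = 2 * (th / 2) by field.
have s0 : 0 <= sin (th / 2) by apply: sin_ge; lra.
have s1 : sin (th / 2) < th / 2 by apply: sin_lt; lra.
rewrite e cos2 -e.
apply/andP; split; nra.
Qed.

Lemma dist_ww (eps : RR) : 0 < eps -> 2 / k%:R < eps / 2 -> th * 10 < eps ->
  th <= 1 -> `|ww - 2%:C| < eps%:C.
Proof.
move=> e0 hk ht ht1.
have e : ww - 2%:C = (rr * cos th - 2) +i* (rr * sin th).
  by rewrite /ww /cs; simpc.
rewrite e normc_def /= ltcR.
have t0 := th_gt0; have tp := th_lePI.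
have s0 : 0 <= sin th by apply: sin_ge; lra.
have s1 : sin th < th by apply: sin_lt; lra.
have /andP[c0 c1] := cos_bounds.
have r2 := rr_ge2; have r3 := rr_le.
have k2 : 2 / (k%:R : RR) <= 1.
  by rewrite ler_pdivrMr ?ltr0n // mul1r ler_nat.
set a := rr * cos th - 2; set b := rr * sin th.
have r3' : rr <= 3 by move: r3 k2; move: (2 / _) => q; lra.
have ha : `|a| <= 2 / k%:R + 3 * th / 2.
  have p1 : rr * (1 - cos th) <= 3 * (th ^+ 2 / 2).
    apply: (@le_trans _ _ (rr * (th ^+ 2 / 2))).
      by apply: ler_wpM2l; lra.
    by apply: ler_wpM2r; nra.
  have p2 : th ^+ 2 <= th by nra.
  have p0 : 0 <= rr * (1 - cos th) by apply: mulr_ge0; lra.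
  move: r3 p0 p1 p2; rewrite ler_norml /a; move: (2 / _) => q *.
  apply/andP; split; lra.
have hb : `|b| <= 3 * th.
  have p3 : rr * sin th <= 3 * th.
    apply: (@le_trans _ _ (3 * sin th)); first by apply: ler_wpM2r.
    by apply: ler_wpM2l; lra.
  by rewrite ger0_norm /b // mulr_ge0 //; lra.
have hab : a ^+ 2 + b ^+ 2 < eps ^+ 2.
  have na := normr_ge0 a; have nb := normr_ge0 b.
  rewrite -(real_normK (num_real a)) -(real_normK (num_real b)).
  move: ha hb hk na nb; move: (2 / _) `|a| `|b| => q A B ha hb hk na nb.
  have hs : A + B < eps by lra.
  nra.
rewrite -(gtr0_norm e0) -sqrtr_sqr ltr_sqrt //.
by rewrite exprn_gt0.
Qed.

End Root.

End Trig.


Lemma sum_min (K C n : nat) :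
  (\sum_(0 <= i < n) (if i < K then C else 0) <= K * C)%N.
Proof.
suff -> : (\sum_(0 <= i < n) (if i < K then C else 0))%N = (minn n K * C)%N.
  by apply: leq_mul => //; apply: geq_minr.
elim: n => [|n IH]; first by rewrite big_geq // min0n.
rewrite big_nat_recr //= IH.
case: ltnP => h.
  by rewrite (minn_idPl h) mulSn addnC.
by rewrite (minn_idPr (leqW h)) addn0.
Qed.

Section Saw.
Variables (k m M : nat).
Local Notation G := (mpG (lab k m M)).

Lemma path_notpad (v : G) (t : seq G) : path (@gadj G) v t ->
  all (fun x => lab k m M x != None) t.
Proof.
elim: t v => [|x t IH] v //= /andP[hx hp].
rewrite (IH x hp) andbT.
by move: hx; rewrite /= /mpadj => /and3P[].
Qed.

Lemma path_notpad_hd (v : G) x (t : seq G) : path (@gadj G) v (x :: t) ->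
  lab k m M v != None.
Proof. by move=> /= /andP[+ _]; rewrite /= /mpadj => /and3P[]. Qed.

Lemma saw_card (v : G) i : (0 < i)%N ->
  (#|[set t : i.-tuple G | saw v t]| <= if i < #|{: W k m}| then #|{: W k m}| ^ #|{: W k m}| else 0)%N.
Proof.
move=> i0.
case: v => [w0|p]; last first.
  suff -> : [set t : i.-tuple G | @saw G (inr p) t] = finset.set0 by rewrite cards0.
  apply/setP => t; rewrite !inE /saw.
  case: t => [[|x s] /= sz]; first by move: sz i0 => /eqP <-.
  by rewrite /mpadj /=.
set unl : G -> W k m := fun x => if x is inl y then y else w0.
have inlK : forall x : G, lab k m M x != None -> inl (unl x) = x.
  by case.
have allinl : forall t : i.-tuple G, t \in [set t : i.-tuple G | @saw G (inl w0) t] ->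
    all (fun x => lab k m M x != None) (inl w0 :: t).
  move=> t; rewrite inE /saw => /andP[hp _].
  by rewrite /= (@path_notpad _ _ hp) andbT; case: (w0) => [[]|[]].
set S := [set t : i.-tuple G | @saw G (inl w0) t].
have sizeS : forall t, t \in S -> (i < #|{: W k m}|)%N.
  move=> t tS; have /allP al := allinl t tS.
  move: tS; rewrite inE /saw => /andP[_ u].
  have u' : uniq (map unl (inl w0 :: t)).
    rewrite map_inj_in_uniq // => x y xs ys e.
    by rewrite -(inlK x (al x xs)) -(inlK y (al y ys)) e.
  have := max_card (mem (map unl (inl w0 :: t))).
  by rewrite (card_uniqP u') size_map /= size_tuple.
case: (ltnP i #|{: W k m}|) => hi; last first.
  suff -> : S = finset.set0 by rewrite cards0.
  apply/setP => t; rewrite [RHS]inE; apply/negP => tS.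
  by have := sizeS t tS; rewrite ltnNge hi.
have KW0 : (0 < #|{: W k m}|)%N by apply: leq_ltn_trans hi.
apply: (@leq_trans (#|{: W k m}| ^ i)); last by rewrite leq_pexp2l // ltnW.
have sub : S \subset [set map_tuple inl t' | t' in [set: i.-tuple (W k m)]].
  apply/fintype.subsetP => t tS; apply/imsetP.
  exists (map_tuple unl t); first by rewrite inE.
  apply: val_inj => /=; rewrite -map_comp map_id_in // => x xt /=.
  have /allP al := allinl t tS.
  by apply: inlK; apply: al; rewrite inE xt orbT.
apply: (leq_trans (subset_leq_card sub)).
apply: (leq_trans (leq_imset_card _ _)).
by rewrite cardsT card_tuple.
Qed.

Lemma Nle_le (v : G) l :
  (N_le v l <= #|{: W k m}| * #|{: W k m}| ^ #|{: W k m}|)%N.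
Proof.
rewrite /N_le.
set K := #|{: W k m}|.
apply: (@leq_trans (\sum_(1 <= i < l.+1) (if i < K then K ^ K else 0))%N).
  rewrite big_nat_cond [X in (_ <= X)%N]big_nat_cond; apply: leq_sum => i /andP[/andP[hi _] _].
  exact: saw_card.
apply: (@leq_trans (\sum_(0 <= i < l.+1) (if i < K then K ^ K else 0))%N).
  by rewrite [X in (_ <= X)%N](@big_ltn _ _ _ 0) // leq_addl.
exact: sum_min.
Qed.

End Saw.


Definition KW (j : nat) : nat := #|{: W j.+2 (2 ^ j.+2)}|.
Definition Mj (j : nat) : nat := (KW j * KW j ^ KW j)%N.
Definition Gj (j : nat) : sgraph := mpG (lab j.+2 (2 ^ j.+2) (Mj j)).
Definition HH (G : sgraph) : Prop := exists j, G = Gj j.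

Lemma card_Gj j : (Mj j <= #|Gj j|)%N.
Proof. by rewrite /Gj /= card_sum card_ord leq_addl. Qed.

Lemma mu_HH : mu_log_le HH 2.
Proof.
exists (ln 2)^-1, 1 => G [j ->] v l h.
have l2 : 0 < ln (2 : RR) by rewrite ln_gt0 // ltr1n.
have cpos : (0 < #|Gj j|)%N by apply/card_gt0P; exists v.
have hN : (N_le v l <= #|Gj j|)%N.
  exact: (leq_trans (@Nle_le _ _ _ v l) (card_Gj j)).
rewrite mul1r; apply: (@le_trans _ _ (#|Gj j|%:R)); first by rewrite ler_nat.
have c0 : 0 < (#|Gj j|%:R : RR) by rewrite ltr0n.
have p0 : 0 < (2 : RR) ^+ l by rewrite exprn_gt0.
rewrite -ler_ln ?posrE // lnXn // -[_ *+ l]mulr_natr.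
have := ler_wpM2l (ltW l2) h; rewrite mulrA mulfV ?gt_eqF // mul1r; apply.
Qed.

Lemma lamc2 : lambda_c 2 = 4.
Proof.
rewrite /lambda_c.
have -> : (2 : RR) - 1 = 1 by rewrite -[2]/(1 + 1 : RR) addrK.
rewrite powR1 /=.
have -> : forall a b : RR, Rdefinitions.Rdiv a b = a / b by [].
rewrite divr1 -[X in _ `^ X]/(2%:R) powR_mulrn //.
by rewrite expr2 -natrM.
Qed.

Lemma Z_zero j : Z (Gj j) (ww j - 1) = 0.
Proof.
rewrite /Gj Z_inst.
have -> : 1 + (ww j - 1) = ww j by rewrite addrC subrK.
rewrite ww_k.
have e : ((- U j)%:C)%C ^+ 2 + (2 ^ j.+2)%:R * ((- U j)%:C)%C - (2 ^ j.+2)%:R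
   = (((- U j) ^+ 2 + mR j * (- U j) - mR j)%:C)%C.
  rewrite (rmorphB (real_complex RR)) (rmorphD (real_complex RR)).
  rewrite !(rmorphM (real_complex RR)) expr2 /mR.
  by rewrite (rmorph_nat (real_complex RR)).
have e2 : (- U j)^+2 + mR j * (- U j) - mR j = 0 by rewrite -(U_eq j); ring.
by rewrite e e2 mulr0.
Qed.

Lemma accum : zero_accum HH ((1 : RR)%:C)%C.
Proof.
move=> eps e0.
have p0 := PI_gt0.
set N := 4 / eps + 10 * PI / eps + PI.
have N0 : 0 <= N.
  rewrite /N; apply: addr_ge0; last exact: ltW.
  by apply: addr_ge0; apply: divr_ge0 => //; apply: ltW => //; rewrite mulr_gt0.
have hj := archi_boundP N0.
set j := Num.Def.archi_bound N in hj.
set K : RR := (j.+2)%:R.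
have jK : (j%:R : RR) < K by rewrite ltr_nat.
have KN : N < K by apply: lt_trans hj jK.
have K0 : 0 < K by rewrite ltr0n.
have i1 : 0 <= 4 / eps by apply: divr_ge0 => //; apply: ltW.
have i2 : 0 <= 10 * PI / eps by apply: divr_ge0; [apply: mulr_ge0; [exact: ler0n | exact: ltW] | exact: ltW].
have g1 : 4 / eps < K by move: KN; rewrite /N; lra.
have g2 : 10 * PI / eps < K by move: KN; rewrite /N; lra.
have g3 : PI < K by move: KN; rewrite /N; lra.
rewrite ltr_pdivrMr // in g1; rewrite ltr_pdivrMr // in g2.
exists (Gj j); split; first by exists j.
exists (ww j - 1); split; first exact: Z_zero.
have -> : ww j - 1 - ((1 : RR)%:C)%C = ww j - ((2 : RR)%:C)%C.
  rewrite -addrA -opprD; congr (_ - _).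
  by apply/eqP; rewrite eq_complex /= addr0 !eqxx.
apply: dist_ww => //.
- rewrite ltr_pdivrMr //; rewrite -/K; lra.
- rewrite /th mulrAC ltr_pdivrMr //; rewrite -/K; lra.
- rewrite /th ler_pdivrMr //; rewrite -/K; lra.
Qed.

Theorem lemma3p2 :
  exists (d : RR) (H : sgraph -> Prop) (lam : RR),
    1 < d /\ mu_log_le H d /\ 0 < lam /\ lam < lambda_c d /\
    zero_accum H (lam%:C)%C /\
    (forall delta : RR, 0 < delta ->
       ~ (forall G : sgraph, H G -> forall z : CC,
            (exists z0 : RR, 0 <= z0 /\ z0 < lambda_c d /\ `|z - (z0%:C)%C| < (delta%:C)%C) ->
            Z G z != 0)).
Proof.
have l1 : (1 : RR) < lambda_c 2 by rewrite lamc2 ltr1n.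
exists 2, HH, 1; split; first by rewrite ltr1n.
split; first exact: mu_HH.
split; first exact: ltr01.
split; first exact: l1.
split; first exact: accum.
move=> delta d0 H.
have [G [HG [z [Z0 hz]]]] := accum delta d0.
have : Z G z != 0.
  by apply: (H G HG z); exists 1; split; [exact: ler01 | split].
by rewrite Z0 eqxx.
Qed.
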